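(* For every $\lambda>0$, $\det(D(\lambda)-I)=0$ if and only if $\det\widetilde D(\lambda)=0$, and if and only if $\det\widehat D(\lambda)=0$. Moreover, if $\eta$ is transient, these equivalences also hold for $\lambda=0$.
   Context: CBP setting. $S$ finite or countable; $\eta$ irreducible continuous-time Markov chain on $S$ with conservative infinitesimal matrix $Q=(q(u,v))$ ($q(u,v)\ge0$ for $u\ne v$, $q(u,u)\in(-\infty,0)$, row sums $0$), transition probabilities $p(t;u,v)$. Distinct catalysts $W=\{w_1,\dots,w_N\}\subset S$; for $k\le N$, $\beta_k>0$, $\alpha_k\in[0,1)$, $f_k$ the generating function of a nonnegative integer random variable with $f_k'(1)<\infty$; $G_k^*(\lambda)=\beta_k/(\lambda+\beta_k)$. Hitting times under taboo: for $u,v\in S$, $H\subset S$, ${}_H\overline\tau_{u,v}$ is the time spent by $\eta$ started at $u$, after leaving $u$, until the first hitting of $v$ if $H$ is not visited before; otherwise $\infty$; ${}_H\overline F_{u,v}$ its improper distribution function, ${}_H\overline F^*_{u,v}(\lambda)=\int_{0-}^\infty e^{-\lambda t}d\,{}_H\overline F_{u,v}(t)$, ${}_HF^*_{u,v}(\lambda)=\frac{-q(u,u)}{\lambda-q(u,u)}{}_H\overline F^*_{u,v}(\lambda)$; $F^*_{u,v}:={}_\emptyset F^*_{u,v}$ (no taboo). $W_j=W\setminus\{w_j\}$. $D(\lambda)=(d_{i,j}(\lambda))_{i,j=1}^N$, $d_{i,j}(\lambda)=\delta_{i,j}\alpha_if_i'(1)G_i^*(\lambda)+(1-\alpha_i)G_i^*(\lambda){}_{W_j}\overline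 F^*_{w_i,w_j}(\lambda)$. $G_\lambda(u,v)=\int_0^\infty e^{-\lambda t}p(t;u,v)\,dt$ for $\lambda>0$, and $G_0(u,v)=\lim_{\lambda\to0+}G_\lambda(u,v)$ (Green's function, finite iff $\eta$ is transient). Define $\widetilde D(\lambda)=(\widetilde d_{i,j}(\lambda))$, $\widehat D(\lambda)=(\widehat d_{i,j}(\lambda))$ by $\widetilde d_{i,j}(\lambda)=\Big(\alpha_if_i'(1)G_i^*(\lambda)-1+(1-\alpha_i)G_i^*(\lambda)\frac{\lambda-q(w_i,w_i)}{-q(w_i,w_i)}\Big)F^*_{w_i,w_j}(\lambda)+\delta_{i,j}\big(\alpha_if_i'(1)G_i^*(\lambda)-1\big)\big(1-F^*_{w_i,w_i}(\lambda)\big)$, $\widehat d_{i,j}(\lambda)=\Big(\alpha_if_i'(1)G_i^*(\lambda)-1+(1-\alpha_i)G_i^*(\lambda)\frac{\lambda-q(w_i,w_i)}{-q(w_i,w_i)}\Big)G_\lambda(w_i,w_j)+\delta_{i,j}\frac{1-\alpha_i}{q(w_i,w_i)}G_i^*(\lambda)$. *)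

(* Defs.v *)
From HB Require Import structures.
From mathcomp Require Import all_boot all_order all_algebra.
From mathcomp Require Import all_classical all_reals all_analysis.
Set Implicit Arguments. Unset Strict Implicit. Unset Printing Implicit Defensive.
Import Order.TTheory GRing.Theory Num.Theory.
Local Open Scope classical_set_scope.
Local Open Scope ring_scope.

Section CBP.
Variables (R : realType) (S : countType).
Implicit Types (q : S -> S -> R) (lam : R) (H : set S) (u v : S).

Definition conservative q : Prop :=
  [/\ forall u v, u <> v -> 0 <= q u v,
      forall u, q u u < 0 &
      forall u, (\esum_(v in [set v | v <> u]) (q u v)%:E)%E = (- q u u)%:E].

Definition qoff q u v : R := if u == v then 0 else q u v.

Definition irreducible q : Prop :=
  forall u v, exists t : seq S,
    path (fun x y => 0 < qoff q x y) u t /\ last u t = v.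

(* Laplace weight of the path x -> s_1 -> ... -> s_n: each visited state x
   (except the final one) contributes its exponential holding time
   (Laplace transform -q(x,x)/(lam - q(x,x))) times the jump probability
   q(x,y)/(-q(x,x)), i.e. a factor q(x,y)/(lam - q(x,x)). *)
Fixpoint pathw q lam (x : S) (s : seq S) : R :=
  if s is y :: s' then qoff q x y / (lam - q x x) * pathw q lam y s' else 1.

(* {}_H \overline F^*_{u,v}(lam): Laplace transform of the (improper)
   distribution of the time spent by eta started at u, after leaving u,
   until the first hitting of v, on the event that H is not visited before
   (jump chain / holding time representation of the minimal chain). *)
Definition tabooFbar q H u v lam : R :=
  fine (\esum_(t in [set t : seq S | forall x, x \in t -> ~ H x /\ x <> v])
         (match t with
          | [::] => qoff q u v / (- q u u)
          | y :: t' => qoff q u y / (- q u u) * pathw q lam y (rcons t' v)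
          end)%:E)%E.

Definition tabooF q H u v lam : R :=
  (- q u u) / (lam - q u u) * tabooFbar q H u v lam.

Definition Fstar q u v lam : R := tabooF q set0 u v lam.

(* Extended-real Green function / resolvent of the (minimal) chain:
   G_lam(u,v) = \int_0^oo e^{-lam t} p(t;u,v) dt, written as the sum over
   all jump paths u = s_0 -> s_1 -> ... -> s_n = v (n >= 0) of the Laplace weights, times the Laplace
   transform 1/(lam - q(v,v)) of the time spent at v. For lam = 0 this is
   (by monotone convergence) lim_{lam -> 0+} G_lam(u,v). *)
Definition GreenE q lam u v : \bar R :=
  (\esum_(s in [set s : seq S | last u s = v]) (pathw q lam u s / (lam - q v v))%:E)%E.

Definition Green q lam u v : R := fine (GreenE q lam u v).

(* transience: the probability of ever returning to u is < 1, for all u *)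
Definition transient q : Prop := forall u, Fstar q u u 0 < 1.

Definition fprime1 (p : nat -> R) : \bar R :=
  (\esum_(n in [set: nat]) (n%:R * p n)%:E)%E.

Definition is_pmf (p : nat -> R) : Prop :=
  (forall n, 0 <= p n) /\ (\esum_(n in [set: nat]) (p n)%:E)%E = 1%E.

Definition Gstar (beta lam : R) : R := beta / (lam + beta).

Variables (N : nat) (w : 'I_N -> S) (beta alpha : 'I_N -> R)
          (p : 'I_N -> nat -> R).

Definition mf (i : 'I_N) : R := fine (fprime1 (p i)).

Definition Wminus (j : 'I_N) : set S := [set x | exists k, k != j /\ x = w k].

Definition Dmat q lam : 'M[R]_N :=
  \matrix_(i, j)
    ((i == j)%:R * alpha i * mf i * Gstar (beta i) lam
     + (1 - alpha i) * Gstar (beta i) lam * tabooFbar q (Wminus j) (w i) (w j) lam).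

Definition coef q lam (i : 'I_N) : R :=
  alpha i * mf i * Gstar (beta i) lam - 1
  + (1 - alpha i) * Gstar (beta i) lam * ((lam - q (w i) (w i)) / (- q (w i) (w i))).

Definition Dtilde q lam : 'M[R]_N :=
  \matrix_(i, j)
    (coef q lam i * Fstar q (w i) (w j) lam
     + (i == j)%:R * (alpha i * mf i * Gstar (beta i) lam - 1)
                  * (1 - Fstar q (w i) (w i) lam)).

Definition Dhat q lam : 'M[R]_N :=
  \matrix_(i, j)
    (coef q lam i * Green q lam (w i) (w j)
     + (i == j)%:R * ((1 - alpha i) / q (w i) (w i)) * Gstar (beta i) lam).

End CBP.

(* Main.v *)
Require Import Defs.
From HB Require Import structures.
From mathcomp Require Import all_boot all_order all_algebra.
From mathcomp Require Import all_classical all_reals all_analysis.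
From mathcomp Require Import ring lra.
Import Order.TTheory GRing.Theory Num.Theory.
Local Open Scope classical_set_scope.
Local Open Scope ring_scope.
Local Open Scope classical_set_scope.
Local Open Scope ring_scope.

Section GenEsum.
Context {R : realType}.
Local Open Scope ereal_scope.

Lemma fsbigZ (T : choiceType) (A : set T) (x : \bar R) (f : T -> \bar R) :
  finite_set A -> (forall i, A i -> 0 <= f i) ->
  \sum_(i \in A) (x * f i) = x * \sum_(i \in A) f i.
Proof.
move=> fA f0; rewrite !fsbig_finite// big_seq_cond [in RHS]big_seq_cond.
rewrite ge0_sume_distrr// => i /andP[+ _]; rewrite in_fset_set// inE.
exact: f0.
Qed.

Lemma esumZ (T : choiceType) (I : set T) (r : R) (f : T -> \bar R) :
  (0 <= r)%R -> (forall i, I i -> 0 <= f i) ->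
  \esum_(i in I) (r%:E * f i) = r%:E * \esum_(i in I) f i.
Proof.
rewrite le0r => /orP[/eqP->|r0] f0.
  by rewrite mul0e esum1// => i _; rewrite mul0e.
rewrite /esum -ereal_sup_pZl//; congr ereal_sup; apply/seteqP; split.
  move=> _ [A [fA AI] <-]; exists (\sum_(i \in A) f i); first by exists A.
  by rewrite fsbigZ// => i /AI/f0.
move=> _ [_ [A [fA AI] <-] <-]; exists A => //.
by rewrite fsbigZ// => i /AI/f0.
Qed.

Lemma esum_subset (T : choiceType) (I J : set T) (f : T -> \bar R) :
  I `<=` J -> (forall i, J i -> 0 <= f i) ->
  \esum_(i in I) f i <= \esum_(i in J) f i.
Proof.
move=> IJ f0; apply: ge_ereal_sup => _ [A [fA AI] <-].
by apply: ereal_sup_ubound; exists A => //; split => // x /AI/IJ.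
Qed.

Lemma esumU (T : choiceType) (I J : set T) (f : T -> \bar R) :
  I `&` J = set0 -> (forall i, (I `|` J) i -> 0 <= f i) ->
  \esum_(i in I `|` J) f i = \esum_(i in I) f i + \esum_(i in J) f i.
Proof.
move=> IJ f0; rewrite (esumID I)//; congr (_ + _); congr esum.
  by rewrite setIUl setIid; apply/seteqP; split=> x /=; [case=> // -[]|left].
apply/seteqP; split=> x /=; first by case=> -[//|] ? _.
move=> Jx; split; [by right|move=> Ix].
by have : (I `&` J) x by []; rewrite IJ.
Qed.


Lemma esum_prod (T1 T2 : choiceType) (A : set T1) (B : set T2)
    (f : T1 -> R) (g : T2 -> R) :
  (forall a, A a -> (0 <= f a)%R) -> (forall b, B b -> (0 <= g b)%R) ->
  \esum_(k in A `*` B) (f k.1 * g k.2)%:E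
  = (\esum_(a in A) (f a)%:E) * (\esum_(b in B) (g b)%:E).
Proof.
move=> f0 g0.
have -> : A `*` B = A `*`` (fun _ => B) by [].
rewrite -(@esum_esum _ _ _ A (fun _ => B) (fun a b => (f a * g b)%:E)); last first.
  by move=> a b Aa Bb; rewrite lee_fin mulr_ge0// ?f0 ?g0.
under eq_esum => a Aa.
  under eq_esum do rewrite EFinM.
  rewrite esumZ; [|exact: f0|by move=> b Bb; rewrite lee_fin g0].
  over.
set G := \esum_(b in B) _.
have G0 : 0 <= G by apply: esum_ge0 => b Bb; rewrite lee_fin g0.
have F0 : 0 <= \esum_(a in A) (f a)%:E by apply: esum_ge0 => a Aa; rewrite lee_fin f0.
have [Gfin|Gnfin] := boolP (G \is a fin_num).
  rewrite -(fineK Gfin); under eq_esum do rewrite muleC.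
  rewrite esumZ ?fine_ge0//; try (by move=> a Aa; rewrite lee_fin f0).
  all: try by rewrite muleC.
have Goo : G = +oo.
  by move/fin_numPn : Gnfin => [Gm|//]; rewrite Gm in G0.
rewrite Goo.
have [F00|Fpos] := eqVneq (\esum_(a in A) (f a)%:E) 0.
  rewrite F00 mul0e esum1// => a Aa.
  have : (f a)%:E <= 0.
    rewrite -F00 -(@esum_set1 R T1 a (fun x => (f x)%:E)) ?lee_fin ?f0//.
    by apply: esum_subset => [x ->//|x Ax]; rewrite lee_fin f0.
  rewrite lee_fin => fa0; have -> : f a = 0%R by apply/le_anti; rewrite fa0 f0.
  by rewrite mul0e.
case: (pselect (exists2 a, A a & (0 < f a)%R)) => [[a Aa fa]|H]; last first.
  move/eqP: Fpos; case; apply: esum1 => a Aa; apply/eqP; rewrite eqe.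
  apply/negPn/negP => fa; apply: H; exists a => //.
  by rewrite lt_neqAle eq_sym fa f0.
rewrite gt0_muley; last by rewrite lt_neqAle eq_sym Fpos.
apply/eqP; rewrite eq_le leey /=.
have sub : [set a] `<=` A by move=> x ->.
have := @esum_subset _ _ _ (fun x => (f x)%:E * +oo) sub.
rewrite esum_set1; last by rewrite mule_ge0// lee_fin ltW.
rewrite gt0_muley ?lte_fin//; apply => x Ax.
by rewrite mule_ge0// lee_fin f0.
Qed.

End GenEsum.

Local Open Scope classical_set_scope.
Local Open Scope ring_scope.

Lemma finite_bound {T : choiceType} (X : set T) (m : T -> nat) :
  finite_set X -> exists n, forall t, X t -> (m t < n)%N.
Proof.
move/finite_fsetP=> [B ->]; exists (\max_(t <- finmap.enum_fset B) m t).+1 => t /= tB.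
by rewrite ltnS; apply: (@leq_bigmax_seq _ _ xpredT m t tB).
Qed.

Section Main.
Context {R : realType} {S : countType} (q : S -> S -> R) (lam : R).
Hypothesis hq : forall u, q u u < 0.
Hypothesis hoff : forall u v, u <> v -> 0 <= q u v.
Hypothesis hlam : 0 <= lam.
Hypothesis hcons : forall u,
  (\esum_(v in [set v | v <> u]) (q u v)%:E)%E = (- q u u)%:E.

Definition star (A : set S) := [set t : seq S | forall x, x \in t -> A x].
Definition Psi (A : set S) u v : \bar R :=
  (\esum_(t in star A) (pathw q lam u (rcons t v))%:E)%E.

Lemma a_gt0 x : 0 < lam - q x x.
Proof. by rewrite subr_gt0 (lt_le_trans (hq x)). Qed.

Lemma qoff_ge0 x y : 0 <= qoff q x y.
Proof. by rewrite /qoff; case: eqP => // /eqP ?; apply: hoff; apply/eqP. Qed.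

Lemma rho_ge0 x y : 0 <= qoff q x y / (lam - q x x).
Proof. by rewrite divr_ge0 ?qoff_ge0 ?ltW ?a_gt0. Qed.

Lemma pw_ge0 x s : 0 <= pathw q lam x s.
Proof. by elim: s x => [|y s IH] x //=; rewrite mulr_ge0 ?rho_ge0. Qed.

Lemma pw_cat x s1 s2 :
  pathw q lam x (s1 ++ s2) = pathw q lam x s1 * pathw q lam (last x s1) s2.
Proof. by elim: s1 x => [|y s IH] x /=; rewrite ?mul1r // IH mulrA. Qed.

Lemma pw_split u t1 z t2 v :
  pathw q lam u (rcons (t1 ++ z :: t2) v) =
  pathw q lam u (rcons t1 z) * pathw q lam z (rcons t2 v).
Proof.
by rewrite rcons_cat -cat_rcons pw_cat last_rcons.
Qed.

Lemma split_inj (A : set S) t1 z t2 t1' z' t2' :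
  star A t1 -> ~ A z -> star A t1' -> ~ A z' ->
  t1 ++ z :: t2 = t1' ++ z' :: t2' -> [/\ t1 = t1', z = z' & t2 = t2'].
Proof.
elim: t1 t1' => [|x t1 IH] [|x' t1'] /= h1 hz h1' hz' //.
- by case=> -> ->.
- by case=> zx; exfalso; apply: hz; rewrite zx; apply: h1'; rewrite mem_head.
- by case=> zx; exfalso; apply: hz'; rewrite -zx; apply: h1; rewrite mem_head.
case=> -> /IH [] //.
- by move=> y yt; apply: h1; rewrite in_cons yt orbT.
- by move=> y yt; apply: h1'; rewrite in_cons yt orbT.
by move=> -> -> ->.
Qed.

Lemma first_split (A : set S) t : ~ star A t ->
  exists t1 z t2, [/\ t = t1 ++ z :: t2, star A t1 & ~ A z].
Proof.
elim: t => [|x t IH] nt.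
  by exfalso; apply: nt => y.
case: (pselect (A x)) => Ax.
  have [t1 [z [t2 [-> s1 nz]]]] : exists t1 z t2, [/\ t = t1 ++ z :: t2, star A t1 & ~ A z].
    apply: IH => st; apply: nt => y; rewrite in_cons => /orP[/eqP->//|]; exact: st.
  exists (x :: t1), z, t2; split => // y; rewrite in_cons => /orP[/eqP->//|]; exact: s1.
by exists [::], x, t.
Qed.


Local Open Scope ereal_scope.

Lemma Psi_ge0 A u v : 0 <= Psi A u v.
Proof. by apply: esum_ge0 => t _; rewrite lee_fin pw_ge0. Qed.

Lemma esum_split (A Z : set S) (Y : set (seq S)) u v :
  (forall z, Z z -> ~ A z) ->
  \esum_(t in [set p.2.1 ++ p.1 :: p.2.2 | p in Z `*` (star A `*` Y)])
     (pathw q lam u (rcons t v))%:E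
  = \esum_(z in Z) (Psi A u z * \esum_(t2 in Y) (pathw q lam z (rcons t2 v))%:E).
Proof.
move=> ZA; rewrite esum_image; last first.
  move=> [z [t1 t2]] [z' [t1' t2']]; rewrite !inE /= => -[Zz [s1 _]] [Zz' [s1' _]] e.
  have := @split_inj A t1 z t2 t1' z' t2' s1 (ZA _ Zz) s1' (ZA _ Zz') e.
  case=> h1 h2 h3. by rewrite h1 h2 h3.
have -> : Z `*` (star A `*` Y) = Z `*`` (fun _ => star A `*` Y) by [].
rewrite -(@esum_esum _ _ _ Z (fun _ => star A `*` Y)
  (fun z p => (pathw q lam u (rcons (p.1 ++ z :: p.2) v))%:E)); last first.
  by move=> *; rewrite lee_fin pw_ge0.
apply: eq_esum => z Zz /=.
under eq_esum do rewrite pw_split.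
rewrite (@esum_prod _ _ _ (star A) Y (fun t => pathw q lam u (rcons t z))
  (fun t => pathw q lam z (rcons t v))) // => *; exact: pw_ge0.
Qed.


Local Open Scope ring_scope.
Local Notation rho x y := (qoff q x y / (lam - q x x)).
Local Notation pw := (pathw q lam).
Definition notv (v : S) := [set x : S | x <> v].
Definition trunc (C : set S) n := star C `&` [set t : seq S | (size t < n)%N].

Lemma star0 : star (@set0 S) = [set [::]].
Proof.
apply/seteqP; split => [[|x t]//= h|t -> x //].
by exfalso; apply: (h x); rewrite mem_head.
Qed.

Lemma Psi0 u z : Psi set0 u z = (rho u z)%:E.
Proof.
rewrite /Psi star0 esum_set1; last by rewrite lee_fin pw_ge0.
by rewrite /= mulr1.
Qed.

Lemma step_set (C : set S) (Y : set (seq S)) :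
  (forall t, Y t -> star C t) ->
  [set p.2.1 ++ p.1 :: p.2.2 | p in C `*` (star set0 `*` Y)]
  = [set x :: t | x in C & t in Y].
Proof.
move=> YC; rewrite star0; apply/seteqP; split.
  by move=> _ [[z [t1 t2]] [/= Cz [-> Yt]] <-]; exists z => //; exists t2.
by move=> _ [z Cz [t Yt <-]]; exists (z, ([::], t)).
Qed.

Lemma step_trunc (C : set S) n :
  trunc C n.+1 = [set [::]] `|` [set p.2.1 ++ p.1 :: p.2.2 | p in C `*` (star set0 `*` trunc C n)].
Proof.
rewrite step_set; last by move=> t [].
apply/seteqP; split.
  move=> [|x t] [/= st szt]; first by left.
  right; exists x; first by apply: st; rewrite mem_head.
  exists t => //; split; last by [].
  by move=> y yt; apply: st; rewrite in_cons yt orbT.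
move=> t [->|[x Cx [t' [st' szt'] <-]]]; first by split; [move=> y|].
split => //= y; rewrite in_cons => /orP[/eqP->//|]; exact: st'.
Qed.

Lemma step_star (C : set S) :
  star C = [set [::]] `|` [set p.2.1 ++ p.1 :: p.2.2 | p in C `*` (star set0 `*` star C)].
Proof.
rewrite step_set // ; apply/seteqP; split.
  move=> [|x t] /= st; first by left.
  right; exists x; first by apply: st; rewrite mem_head.
  by exists t => // y yt; apply: st; rewrite in_cons yt orbT.
move=> t [->|[x Cx [t' st' <-]]]; first by move=> y.
by move=> y; rewrite in_cons => /orP[/eqP->//|]; exact: st'.
Qed.

Lemma nil_disj (Z : set S) (A : set S) (Y : set (seq S)) :
  [set [::]] `&` [set p.2.1 ++ p.1 :: p.2.2 | p in Z `*` (star A `*` Y)] = set0.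
Proof.
apply/seteqP; split => // t [/= ->] [[z [t1 t2]] _ /=].
by case: t1.
Qed.

Local Open Scope ereal_scope.

Lemma rho_sum u : \esum_(y in [set: S]) (rho u y)%:E <= 1.
Proof.
have a0 := a_gt0 u.
under eq_esum do rewrite mulrC EFinM.
rewrite esumZ; last 2 first.
- by rewrite invr_ge0 ltW.
- by move=> y _; rewrite lee_fin qoff_ge0.
rewrite (esumID [set y | y <> u]); last by move=> y _; rewrite lee_fin qoff_ge0.
rewrite [X in _ + X]esum1; last first.
  by move=> y [_ /= /contrapT ->]; rewrite /qoff eqxx.
rewrite adde0 setTI.
rewrite (eq_esum (b := fun y => (q u y)%:E)); last first.
  by move=> y /= yu; rewrite /qoff; case: eqP => // /esym.
rewrite hcons -EFinM lee_fin mulrC ler_pdivrMr// mul1r.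
by rewrite -[X in (X <= _)%R]add0r lerD2r.
Qed.

Lemma rho_split u v :
  (rho u v)%:E + \esum_(z in notv v) (rho u z)%:E
  = \esum_(y in [set: S]) (rho u y)%:E.
Proof.
rewrite [RHS](esumID [set v]); last by move=> *; rewrite lee_fin rho_ge0.
rewrite setTI esum_set1 ?lee_fin ?rho_ge0//; congr (_ + _).
by congr esum; apply/seteqP; split => x /=; [move=> xv; split|case].
Qed.

Lemma Psi_trunc_le1 v n u :
  \esum_(t in trunc (notv v) n) (pw u (rcons t v))%:E <= 1.
Proof.
elim: n u => [|n IH] u.
  by rewrite esum1// => t [_ /=].
rewrite step_trunc esumU; last 2 first.
- exact: nil_disj.
- by move=> *; rewrite lee_fin pw_ge0.
rewrite esum_set1 ?lee_fin ?pw_ge0//= mulr1.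
rewrite esum_split; last by move=> z _.
rewrite (le_trans _ (rho_sum u))// -(rho_split u v) leeD2l//.
apply: le_esum => z _; rewrite Psi0.
rewrite -[X in _ <= X]mule1 lee_pmul ?lee_fin ?rho_ge0//.
by apply: esum_ge0 => *; rewrite lee_fin pw_ge0.
Qed.

Lemma Psi_le1 v u : Psi (notv v) u v <= 1.
Proof.
apply: ge_ereal_sup => _ [X [fX Xs] <-].
have [n hn] := @finite_bound _ X (@size S) fX.
apply: le_trans (Psi_trunc_le1 v n u).
by apply: ereal_sup_ubound; exists X => //; split => // t Xt; split; [apply: Xs|apply: hn].
Qed.

Lemma Psi_sub_le1 (A : set S) v u : A `<=` notv v -> Psi A u v <= 1.
Proof.
move=> Av; apply: le_trans (Psi_le1 v u); apply: esum_subset.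
  by move=> t st x xt; apply: Av; apply: st.
by move=> *; rewrite lee_fin pw_ge0.
Qed.

Lemma Psi_fin (A : set S) v u : A `<=` notv v -> Psi A u v \is a fin_num.
Proof.
move=> Av; rewrite ge0_fin_numE ?Psi_ge0//.
by rewrite (le_lt_trans (@Psi_sub_le1 A v u Av)) ?ltry.
Qed.

Lemma Psi_first u v :
  Psi (notv v) u v <= ((- q u u) / (lam - q u u))%:E.
Proof.
rewrite /Psi step_star esumU; last 2 first.
- exact: nil_disj.
- by move=> *; rewrite lee_fin pw_ge0.
rewrite esum_set1 ?lee_fin ?pw_ge0//= mulr1.
rewrite esum_split; last by move=> z _.
have a0 := a_gt0 u.
apply: le_trans (_ : \esum_(y in [set: S]) (rho u y)%:E <= _); last first.
  under eq_esum do rewrite mulrC EFinM.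
  rewrite esumZ; last 2 first.
  - by rewrite invr_ge0 ltW.
  - by move=> y _; rewrite lee_fin qoff_ge0.
  rewrite (esumID [set y | y <> u]); last by move=> y _; rewrite lee_fin qoff_ge0.
  rewrite [X in _ + X]esum1; last first.
    by move=> y [_ /= /contrapT ->]; rewrite /qoff eqxx.
  rewrite adde0 setTI.
  rewrite (eq_esum (b := fun y => (q u y)%:E)); last first.
    by move=> y /= yu; rewrite /qoff; case: eqP => // /esym.
  by rewrite hcons -EFinM mulrC.
rewrite -(rho_split u v) leeD2l//.
apply: le_esum => z _; rewrite Psi0.
rewrite -[X in _ <= X]mule1 lee_pmul ?lee_fin ?rho_ge0//.
- exact: Psi_ge0.
- exact: Psi_le1.
Qed.


Lemma tabooF_Psi (H : set S) u v :
  tabooF q H u v lam = fine (Psi [set x | ~ H x /\ x <> v] u v).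
Proof.
have a0 := a_gt0 u.
have q0 : (q u u != 0)%R by rewrite lt_eqF ?hq.
have a0' : (lam - q u u != 0)%R by rewrite gt_eqF.
have c0 : (0 <= (lam - q u u) / (- q u u))%R.
  by rewrite divr_ge0 ?ltW// oppr_gt0 hq.
rewrite /tabooF /tabooFbar.
rewrite (eq_esum (b := fun t => ((lam - q u u) / (- q u u))%:E * (pw u (rcons t v))%:E)); last first.
  move=> [|y t] _ /=; rewrite -EFinM; congr EFin; field; by rewrite q0 a0'.
rewrite esumZ//; last by move=> *; rewrite lee_fin pw_ge0.
have fin : Psi [set x | ~ H x /\ x <> v] u v \is a fin_num.
  by apply: Psi_fin => x [].
rewrite -/(Psi [set x | ~ H x /\ x <> v] u v) fineM //.
simpl; field; by rewrite q0 a0'.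
Qed.

Lemma Fstar_Psi u v : Fstar q u v lam = fine (Psi (notv v) u v).
Proof.
rewrite /Fstar tabooF_Psi; congr (fine (Psi _ _ _)).
by apply/seteqP; split => x /=; [case|split].
Qed.

Section Wdecomp.
Variables (N : nat) (w : 'I_N -> S).
Hypothesis winj : injective w.
Definition notW := [set x : S | forall k, x <> w k].

Lemma Wset k : [set x | ~ Wminus w k x /\ x <> w k] = notW.
Proof.
apply/seteqP; split => x /=.
  move=> [h xk] m; case: (eqVneq m k) => [->//|mk] xm.
  by apply: h; exists m; split.
move=> h; split; last exact: h.
by move=> [m [_ xm]]; apply: (h m).
Qed.

Lemma tabooW i k : tabooF q (Wminus w k) (w i) (w k) lam = fine (Psi notW (w i) (w k)).
Proof. by rewrite tabooF_Psi Wset. Qed.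

Lemma esum_Wminus j (g : S -> \bar R) : (forall z, 0 <= g z) ->
  \esum_(z in Wminus w j) g z = \sum_(k | k != j) g (w k).
Proof.
move=> g0.
have -> : Wminus w j = w @` [set k | k != j].
  apply/seteqP; split => x /=.
    by move=> [k [kj ->]]; exists k.
  by move=> [k kj <-]; exists k; split.
rewrite esum_image; last by move=> a b _ _ /winj.
rewrite esum_fset; last 2 first.
- exact: finite_finset.
- by move=> *; exact: g0.
rewrite -(@bigfs _ _ _ _ (index_enum 'I_N) (fun k => k != j)) //.
- exact: index_enum_uniq.
- by move=> k _; rewrite mem_index_enum.
Qed.

Lemma decomp i j :
  Psi (notv (w j)) (w i) (w j) = Psi notW (w i) (w j)
    + \sum_(k | k != j) (Psi notW (w i) (w k) * Psi (notv (w j)) (w k) (w j)).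
Proof.
set Y := star (notv (w j)).
have E : Y = star notW `|`
   [set p.2.1 ++ p.1 :: p.2.2 | p in Wminus w j `*` (star notW `*` Y)].
  apply/seteqP; split.
    move=> t st; case: (pselect (star notW t)) => [h|h]; [by left|right].
    have [t1 [z [t2 [et s1 nz]]]] := @first_split notW t h.
    have [k zk] : exists k, z = w k.
      by apply: contrapT => nk; apply: nz => k zk; apply: nk; exists k.
    have kj : k != j.
      apply/eqP => kj; apply: (st z); last by rewrite zk kj.
      by rewrite et mem_cat in_cons eqxx orbT.
    exists (z, (t1, t2)) => //=; split; first by exists k; split.
    split => // x xt; apply: st; by rewrite et mem_cat in_cons xt !orbT.
  move=> t [st|[[z [t1 t2]] [/= [k [kj zk]] [s1 s2]] <-]].
    by move=> x /st xW; apply: xW.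
  move=> x; rewrite mem_cat in_cons => /orP[/s1 xW|/orP[/eqP ->|/s2//]].
    exact: xW.
  by rewrite zk => /winj /eqP; rewrite (negPf kj).
have D : star notW `&`
   [set p.2.1 ++ p.1 :: p.2.2 | p in Wminus w j `*` (star notW `*` Y)] = set0.
  apply/seteqP; split => // t [st [[z [t1 t2]] [/= [k [kj zk]] _] et]].
  by apply: (st z _ k zk); rewrite -et mem_cat in_cons eqxx orbT.
rewrite {1}/Psi -/Y E esumU //; last by move=> *; rewrite lee_fin pw_ge0.
rewrite esum_split; last by move=> z [k [_ ->]] h; exact: (h k).
congr (_ + _).
rewrite esum_Wminus //.
by move=> z; rewrite mule_ge0 ?Psi_ge0//; apply: esum_ge0 => *; rewrite lee_fin pw_ge0.
Qed.

End Wdecomp.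

Lemma star_setT : star (@setT S) = setT.
Proof. by apply/seteqP; split => t //= _ x. Qed.

Lemma Q_split v :
  star (@setT S) = star (notv v) `|`
    [set p.2.1 ++ p.1 :: p.2.2 | p in [set v] `*` (star (notv v) `*` star setT)].
Proof.
rewrite star_setT; apply/seteqP; split => // t _.
case: (pselect (star (notv v) t)) => [h|h]; [by left|right].
have [t1 [z [t2 [et s1 nz]]]] := @first_split (notv v) t h.
have zv : z = v by apply: contrapT.
by exists (z, (t1, t2)) => //; split => //; split.
Qed.

Lemma nv_disj v (Y : set (seq S)) :
  star (notv v) `&`
    [set p.2.1 ++ p.1 :: p.2.2 | p in [set v] `*` (star (notv v) `*` Y)] = set0.
Proof.
apply/seteqP; split => // t [st [[z [t1 t2]] [/= zv _] et]].
by apply: (st z) => //; rewrite -et mem_cat in_cons eqxx orbT.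
Qed.

Lemma Q_eq u v :
  Psi setT u v = Psi (notv v) u v + Psi (notv v) u v * Psi setT v v.
Proof.
rewrite {1}/Psi (Q_split v) esumU; last 2 first.
- exact: nv_disj.
- by move=> *; rewrite lee_fin pw_ge0.
rewrite esum_split; last by move=> z -> /=.
rewrite esum_set1 //.
by rewrite mule_ge0 ?Psi_ge0//; apply: esum_ge0 => *; rewrite lee_fin pw_ge0.
Qed.

Definition cnt v M := [set t : seq S | (count_mem v t <= M)%N].

Lemma cnt_sub v M : cnt v M.+1 `<=` star (notv v) `|`
    [set p.2.1 ++ p.1 :: p.2.2 | p in [set v] `*` (star (notv v) `*` cnt v M)].
Proof.
move=> t ct; case: (pselect (star (notv v) t)) => [h|h]; [by left|right].
have [t1 [z [t2 [et s1 nz]]]] := @first_split (notv v) t h.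
have zv : z = v by apply: contrapT.
exists (z, (t1, t2)) => //; split => //; split => //.
move: ct; rewrite /cnt /= et count_cat /= zv eqxx.
have -> : count_mem v t1 = 0%N.
  by apply/count_memPn/negP => /s1.
by rewrite add0n add1n ltnS.
Qed.

Lemma cnt0_sub v : cnt v 0 `<=` star (notv v).
Proof.
move=> t; rewrite /cnt /= leqn0 => /eqP /count_memPn vt x xt xv.
by move: vt; rewrite -xv xt.
Qed.

Lemma E_bound v (phi : R) : Psi (notv v) v v = phi%:E -> (phi < 1)%R ->
  forall M, \esum_(t in cnt v M) (pw v (rcons t v))%:E <= (phi / (1 - phi))%:E.
Proof.
move=> Pe p1.
have p0 : (0 <= phi)%R by rewrite -lee_fin -Pe Psi_ge0.
have d0 : (0 < 1 - phi)%R by rewrite subr_gt0.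
have key : (phi <= phi / (1 - phi))%R.
  by rewrite ler_pdivlMr// ler_piMr// lerBlDr lerDl.
elim=> [|M IH].
  apply: le_trans (_ : Psi (notv v) v v <= _); last by rewrite Pe lee_fin.
  apply: esum_subset; first exact: cnt0_sub.
  by move=> *; rewrite lee_fin pw_ge0.
apply: le_trans; first apply: esum_subset (@cnt_sub v M) _.
  by move=> *; rewrite lee_fin pw_ge0.
rewrite esumU; last 2 first.
- exact: nv_disj.
- by move=> *; rewrite lee_fin pw_ge0.
rewrite esum_split; last by move=> z -> /=.
rewrite esum_set1; last first.
  by rewrite mule_ge0 ?Psi_ge0//; apply: esum_ge0 => *; rewrite lee_fin pw_ge0.
rewrite -/(Psi (notv v) v v) Pe.
apply: le_trans (_ : phi%:E + phi%:E * (phi / (1 - phi))%:E <= _).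
  by rewrite leeD2l//; apply: lee_wpmul2l => //; rewrite lee_fin.
rewrite -EFinM -EFinD lee_fin.
have -> : (phi + phi * (phi / (1 - phi)) = phi / (1 - phi))%R.
  by field; rewrite gt_eqF.
by [].
Qed.

Lemma Qv_bound v (phi : R) : Psi (notv v) v v = phi%:E -> (phi < 1)%R ->
  Psi setT v v <= (phi / (1 - phi))%:E.
Proof.
move=> Pe p1; apply: ge_ereal_sup => _ [X [fX Xs] <-].
have [n hn] := @finite_bound _ X (fun t => count_mem v t) fX.
apply: le_trans (@E_bound v phi Pe p1 n).
apply: ereal_sup_ubound; exists X => //; split => // t Xt.
by rewrite /cnt /= ltnW ?hn.
Qed.

Lemma paths_set u v : [set s : seq S | last u s = v] =
  [set s | s = [::] /\ u = v] `|` [set rcons t v | t in [set: seq S]].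
Proof.
apply/seteqP; split => s /=.
  case/lastP: s => [/= ->|t x]; first by left.
  by rewrite last_rcons => ->; right; exists t.
by move=> [[-> ->]|[t _ <-]]; rewrite ?last_rcons.
Qed.

Lemma GreenE_eq u v : GreenE q lam u v =
  ((lam - q v v)^-1)%:E * ((u == v)%:R%:E + Psi setT u v).
Proof.
have a0 := a_gt0 v.
rewrite /GreenE.
under eq_esum do rewrite mulrC EFinM.
rewrite esumZ; last 2 first.
- by rewrite invr_ge0 ltW.
- by move=> *; rewrite lee_fin pw_ge0.
congr (_ * _).
rewrite paths_set esumU; last 2 first.
- apply/seteqP; split => // s [[-> _] [t _]]; by case: t.
- by move=> *; rewrite lee_fin pw_ge0.
congr (_ + _); last first.
  rewrite esum_image; last by move=> a b _ _; exact: rcons_injl.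
  by rewrite /Psi star_setT.
case: eqP => [<-|uv].
  have -> : [set s : seq S | s = [::] /\ u = u] = [set [::]].
    by apply/seteqP; split => s /=; [case|move=> ->].
  by rewrite esum_set1.
by rewrite esum1 // => s [_ /uv].
Qed.

Lemma Green_formula u v : (Fstar q v v lam < 1)%R ->
  Green q lam u v = ((if u == v then 1 else Fstar q u v lam)
                     / ((lam - q v v) * (1 - Fstar q v v lam)))%R.
Proof.
move=> F1.
have a0 := a_gt0 v.
set phi := Fstar q v v lam.
have finv : Psi (notv v) v v \is a fin_num by apply: Psi_fin.
have Pe : Psi (notv v) v v = phi%:E by rewrite /phi Fstar_Psi fineK.
have d0 : (0 < 1 - phi)%R by rewrite subr_gt0.
have Qb := @Qv_bound v phi Pe F1.
have Qfin : Psi setT v v \is a fin_num.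
  rewrite ge0_fin_numE ?Psi_ge0//; exact: le_lt_trans Qb (ltry _).
set Qv := fine (Psi setT v v).
have QvE : Psi setT v v = Qv%:E by rewrite fineK.
have Qv_val : Qv = (phi / (1 - phi))%R.
  have := Q_eq v v; rewrite QvE Pe -EFinM -EFinD => -[].
  move=> h; have e : (Qv * (1 - phi) = phi)%R by rewrite mulrBr mulr1 {1}h; ring.
  by rewrite -[in LHS](mulfK (negbT (gt_eqF d0)) Qv) e.
rewrite /Green GreenE_eq.
case: eqP => [->|uv].
  rewrite QvE -EFinD -EFinM /= Qv_val.
  by field; rewrite !gt_eqF.
have finu : Psi (notv v) u v \is a fin_num by apply: Psi_fin.
have Pu : Psi (notv v) u v = (Fstar q u v lam)%:E by rewrite Fstar_Psi fineK.
have := Q_eq u v; rewrite Pu QvE -EFinM -EFinD => ->.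
rewrite add0e -EFinM /= Qv_val.
by field; rewrite !gt_eqF.
Qed.

End Main.

Local Open Scope classical_set_scope.
Local Open Scope ring_scope.

Lemma main_lam (R : realType) (S : countType) (q : S -> S -> R)
  (N : nat) (w : 'I_N -> S) (beta alpha : 'I_N -> R) (p : 'I_N -> nat -> R) (lam : R)
  (hq : forall u, q u u < 0) (hoff : forall u v, u <> v -> 0 <= q u v)
  (hlam : 0 <= lam)
  (hcons : forall u, (\esum_(v in [set v | v <> u]) (q u v)%:E)%E = (- q u u)%:E)
  (winj : injective w)
  (F1 : forall j, Fstar q (w j) (w j) lam < 1) :
    (\det (Dmat w beta alpha p q lam - 1%:M) = 0
       <-> \det (Dtilde w beta alpha p q lam) = 0) /\
    (\det (Dtilde w beta alpha p q lam) = 0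
       <-> \det (Dhat w beta alpha p q lam) = 0).
Proof.
pose F i j := Fstar q (w i) (w j) lam.
pose K i k := tabooF q (Wminus w k) (w i) (w k) lam.
have Kfin i k : Psi q lam (notW N w) (w i) (w k) = (K i k)%:E.
  rewrite /K (tabooW q lam hq hoff hlam hcons) fineK //.
  by apply: (Psi_fin q lam hq hoff hlam hcons) => x /= h; apply: h.
have Ffin i j : Psi q lam (notv (w j)) (w i) (w j) = (F i j)%:E.
  rewrite /F (Fstar_Psi q lam hq hoff hlam hcons) fineK //.
  exact: (Psi_fin q lam hq hoff hlam hcons).
have dec i j : F i j = K i j + \sum_(k | k != j) K i k * F k j.
  have h := decomp q lam hq hoff hlam N w winj i j.
  rewrite Ffin Kfin in h.
  have hs : (\sum_(k | k != j) (Psi q lam (notW N w) (w i) (w k) *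
                Psi q lam (notv (w j)) (w k) (w j)))%E
            = (\sum_(k | k != j) K i k * F k j)%:E.
    by rewrite -sumEFin; apply: eq_bigr => k _; rewrite Kfin Ffin.
  by rewrite hs -EFinD in h; case: h.
pose M : 'M[R]_N := \matrix_(i, j) (if i == j then 1 else F i j).
pose Km : 'M[R]_N := \matrix_(i, k) K i k.
have KM : Km *m M = \matrix_(i, j) F i j.
  apply/matrixP => i j; rewrite !mxE (bigD1 j) //= !mxE eqxx mulr1 [RHS]dec.
  congr (_ + _); apply: eq_bigr => k kj; rewrite !mxE (negPf kj).
  by [].
have IKM : (1%:M - Km) *m M = diag_mx (\row_j (1 - F j j)).
  rewrite mulmxBl mul1mx KM; apply/matrixP => i j; rewrite !mxE.
  by case: (eqVneq i j) => [->|ij]; rewrite ?eqxx ?(negPf ij) ?mulr1n ?mulr0n ?subrr.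
have Fne1 j : 1 - F j j != 0 by rewrite subr_eq0 eq_sym lt_eqF ?F1.
have detM : \det M != 0.
  apply/eqP => h0; have := congr1 determinant IKM.
  rewrite det_mulmx h0 mulr0 det_diag => /esym/eqP.
  apply/negP/prodf_neq0 => j _; rewrite mxE; exact: Fne1.
have a0 i : 0 < lam - q (w i) (w i) by rewrite subr_gt0 (lt_le_trans (hq _)).
have qne i : q (w i) (w i) != 0 by rewrite lt_eqF ?hq.
have ane i : lam - q (w i) (w i) != 0 by rewrite gt_eqF ?a0.
pose c i := (lam - q (w i) (w i)) / (- q (w i) (w i)).
pose dA : 'rV[R]_N := \row_i (alpha i * mf p i * Gstar (beta i) lam - 1).
pose dB : 'rV[R]_N := \row_i ((1 - alpha i) * Gstar (beta i) lam * c i).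
have Tbar i j : tabooFbar q (Wminus w j) (w i) (w j) lam = c i * K i j.
  rewrite /K /tabooF /c; field; by rewrite qne ane.
have D1 : Dmat w beta alpha p q lam - 1%:M = diag_mx dA + diag_mx dB *m Km.
  rewrite mul_diag_mx; apply/matrixP => i j; rewrite !mxE Tbar.
  case: (eqVneq i j) => [<-|ij]; rewrite ?eqxx ?(negPf ij) ?mulr1n ?mulr0n /=; ring.
have D2 : Dtilde w beta alpha p q lam = (Dmat w beta alpha p q lam - 1%:M) *m M.
  rewrite D1 mulmxDl -mulmxA KM !mul_diag_mx; apply/matrixP => i j.
  rewrite !mxE /Defs.coef /F /c.
  case: (eqVneq i j) => [<-|ij]; rewrite ?eqxx ?(negPf ij) ?mulr1n ?mulr0n /=; ring.
pose g : 'rV[R]_N := \row_j (1 / ((lam - q (w j) (w j)) * (1 - F j j))).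
have D3 : Dhat w beta alpha p q lam = Dtilde w beta alpha p q lam *m diag_mx g.
  rewrite mul_mx_diag; apply/matrixP => i j; rewrite !mxE.
  rewrite (Green_formula q lam hq hoff hlam hcons) ?F1 // (inj_eq winj) /Defs.coef /F.
  case: (eqVneq i j) => [<-|ij]; rewrite ?eqxx ?(negPf ij) ?mulr1n ?mulr0n /=.
    have := Fne1 i; rewrite /F => h.
    by field; rewrite qne ane h.
  have := Fne1 j; rewrite /F => h.
  by field; rewrite ?qne ?ane ?h.
have gne : \prod_j g 0 j != 0.
  apply/prodf_neq0 => j _; rewrite mxE div1r invr_eq0 mulf_eq0 negb_or ane.
  exact: Fne1.
split; split => h.
- by rewrite D2 det_mulmx h mul0r.
- move: h; rewrite D2 det_mulmx => /eqP; rewrite mulf_eq0 (negPf detM) orbF.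
  by move/eqP.
- by rewrite D3 det_mulmx h mul0r.
- move: h; rewrite D3 det_mulmx det_diag => /eqP; rewrite mulf_eq0 (negPf gne) orbF.
  by move/eqP.
Qed.

Local Open Scope classical_set_scope.
Local Open Scope ring_scope.

Theorem lemma5 (R : realType) (S : countType) (q : S -> S -> R)
  (N : nat) (w : 'I_N -> S) (beta alpha : 'I_N -> R) (p : 'I_N -> nat -> R) :
  conservative q -> irreducible q ->
  injective w ->
  (forall k, 0 < beta k) ->
  (forall k, 0 <= alpha k < 1) ->
  (forall k, is_pmf (p k)) ->
  (forall k, (fprime1 (p k) < +oo)%E) ->
  let P := fun lam : R =>
    (\det (Dmat w beta alpha p q lam - 1%:M) = 0
       <-> \det (Dtilde w beta alpha p q lam) = 0) /\
    (\det (Dtilde w beta alpha p q lam) = 0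
       <-> \det (Dhat w beta alpha p q lam) = 0) in
  (forall lam : R, 0 < lam -> P lam) /\ (transient q -> P 0).
Proof.
move=> [hoff hq hcons] _ winj _ _ _ _ P; split.
  move=> lam lam0; have hlam : 0 <= lam by rewrite ltW.
  apply: (@main_lam R S q N w beta alpha p lam hq hoff hlam hcons winj) => j.
  rewrite (Fstar_Psi q lam hq hoff hlam hcons).
  have fin := Psi_fin q lam hq hoff hlam hcons (notv (w j)) (w j) (w j) (fun x h => h).
  have := Psi_first q lam hq hoff hlam hcons (w j) (w j).
  rewrite -(fineK fin) lee_fin => /le_lt_trans; apply.
  have a0 : 0 < lam - q (w j) (w j) by rewrite subr_gt0 (lt_trans (hq _)).
  by rewrite ltr_pdivrMr // mul1r -[X in X < _]add0r ltrD2r.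
move=> htr.
apply: (@main_lam R S q N w beta alpha p 0 hq hoff (lexx 0) hcons winj) => j.
exact: htr.
Qed.
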